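(* Let $b\ge2$ be an integer. (1) For any subset $S$ of $\mathbb{Z}$ with $|S|\ge n$ (allowing $n=+\infty$) and any $S$-test sequence $\mathbf{s}=(s_i)_{i=0}^n$, one has for $1\le m<n$ $$\sum_{k=1}^m\alpha_k(S,b,\mathbf{s})\ \ge\ \sum_{k=1}^m\alpha_k(S,b).$$ (2) Given a fixed $N\ge1$, if the $S$-test sequence $(s_i)_{i=0}^N$ is the initial part of a $b$-ordering of $S$, then equality holds in the inequality of (1) for $1\le m\le N$.
   Context: For an integer $b\ge2$ and $a\in\mathbb{Z}$, $\operatorname{ord}_b(a)$ is the largest $k\in\mathbb{N}$ with $b^k\mid a$, and $\operatorname{ord}_b(0)=+\infty$. For nonempty $S\subseteq\mathbb{Z}$, an $S$-test sequence is any (finite or infinite) sequence $\mathbf{s}=(s_i)$ of elements of $S$, repetitions allowed; its $b$-exponent values are $\alpha_k(S,b,\mathbf{s}):=\sum_{j=0}^{k-1}\operatorname{ord}_b(s_k-s_j)$. A $b$-ordering of $S$ is an infinite $S$-test sequence $(a_i)_{i\ge0}$ such that for every $i\ge1$, $a_i$ attains $\min_{a'\in S}\sum_{j=0}^{i-1}\operatorname{ord}_b(a'-a_j)$. The $b$-exponent sequence of $S$ is $\alpha_k(S,b):=\alpha_k(S,b,\mathbf{a})$ for any $b$-ordering $\mathbf{a}$ of $S$; this does not depend on the choice of $b$-ordering. *)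

(* Defs.v *)
From mathcomp Require Import all_boot all_algebra.
Set Implicit Arguments. Unset Strict Implicit. Unset Printing Implicit Defensive.

Inductive enat := Fin of nat | Inf.

Definition eadd (x y : enat) : enat :=
  match x, y with Fin a, Fin c => Fin (a + c) | _, _ => Inf end.

Definition ele (x y : enat) : bool :=
  match x, y with
  | _, Inf => true
  | Inf, Fin _ => false
  | Fin a, Fin c => (a <= c)%N
  end.

Definition elt (x y : enat) : bool :=
  match x, y with
  | Fin _, Inf => true
  | Fin a, Fin c => (a < c)%N
  | _, _ => false
  end.

(* ord_b(a): the largest k with b^k | a, and +oo for a = 0.
   For b >= 2 and a <> 0, any such k satisfies k <= |a|, so the bounded
   maximum below is exactly the largest such k. *)
Definition ordb (b : nat) (a : int) : enat :=
  if a == 0%R then Inf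
  else Fin (\max_(k < (absz a).+1 | (b ^ k %| absz a)%N) k).

Definition alpha (b : nat) (s : nat -> int) (k : nat) : enat :=
  \big[eadd/Fin 0]_(j < k) ordb b (s k - s j)%R.

Definition alpha_sum (b : nat) (s : nat -> int) (m : nat) : enat :=
  \big[eadd/Fin 0]_(1 <= k < m.+1) alpha b s k.

Definition is_b_ordering (S : int -> Prop) (b : nat) (a : nat -> int) : Prop :=
  (forall i, S (a i)) /\
  (forall i, (1 <= i)%N -> forall a', S a' ->
     ele (\big[eadd/Fin 0]_(j < i) ordb b (a i - a j)%R)
         (\big[eadd/Fin 0]_(j < i) ordb b (a' - a j)%R)).

Definition has_at_least (S : int -> Prop) (k : nat) : Prop :=
  exists l : seq int, [/\ uniq l, size l = k & forall x, x \in l -> S x].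

Definition card_ge (S : int -> Prop) (n : enat) : Prop :=
  forall k, ele (Fin k) n -> has_at_least S k.

(* Main.v *)
Require Import Defs.
From mathcomp Require Import all_boot all_algebra.
From HB Require Import structures.
From mathcomp Require Import zify.
Set Implicit Arguments. Unset Strict Implicit. Unset Printing Implicit Defensive.
Import GRing.Theory.

Lemma eaddA : associative eadd. Proof. by case=> [a|] [c|] [d|] //=; rewrite addnA. Qed.
Lemma eaddC : commutative eadd. Proof. by case=> [a|] [c|] //=; rewrite addnC. Qed.
Lemma eadd0 : left_id (Fin 0) eadd. Proof. by case. Qed.
HB.instance Definition _ := Monoid.isComLaw.Build enat (Fin 0) eadd eaddA eaddC eadd0.

Lemma eaddACA x y z w : eadd (eadd x y) (eadd z w) = eadd (eadd x z) (eadd y w).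
Proof. by case: x => [?|]; case: y => [?|]; case: z => [?|]; case: w => [?|] //=; congr Fin; lia. Qed.

Lemma ele_Inf x : ele x Inf. Proof. by case: x. Qed.
Lemma ele0 x : ele (Fin 0) x. Proof. by case: x. Qed.
Lemma ele_trans x y z : ele x y -> ele y z -> ele x z.
Proof. by case: x => [?|]; case: y => [?|]; case: z => [?|] //=; apply: leq_trans. Qed.
Lemma ele_add x1 y1 x2 y2 : ele x1 y1 -> ele x2 y2 -> ele (eadd x1 x2) (eadd y1 y2).
Proof. by case: x1 => [?|]; case: y1 => [?|]; case: x2 => [?|]; case: y2 => [?|] //=; apply: leq_add. Qed.
Lemma ele_anti x y : ele x y -> ele y x -> x = y.
Proof. by case: x => [?|]; case: y => [?|] //= h1 h2; congr Fin; apply/eqP; rewrite eqn_leq h1 h2. Qed.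

Lemma ordb_sym b (x y : int) : ordb b (x - y)%R = ordb b (y - x)%R.
Proof. by rewrite /ordb -opprB abszN oppr_eq0. Qed.

Lemma ordb0 b : ordb b 0%R = Inf. Proof. by rewrite /ordb eqxx. Qed.

Definition D (b : nat) (l : seq int) (x : int) : enat :=
  \big[eadd/Fin 0]_(y <- l) ordb b (x - y)%R.

Fixpoint Pl (b : nat) (l : seq int) : enat :=
  match l with [::] => Fin 0 | x :: l' => eadd (D b l' x) (Pl b l') end.

Lemma D_Inf b l x : x \in l -> D b l x = Inf.
Proof.
move=> hx; rewrite /D (perm_big _ (perm_to_rem hx)) big_cons subrr ordb0.
by [].
Qed.

Lemma Pl_rem b L x : x \in L -> Pl b L = eadd (D b (rem x L) x) (Pl b (rem x L)).
Proof.
elim: L => [|y l IH] //= hx.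
case: eqP => [->|/eqP ne] //.
have hxl : x \in l by move: hx; rewrite inE eq_sym (negbTE ne).
rewrite (IH hxl) /= {1}/D (perm_big _ (perm_to_rem hxl)) big_cons.
rewrite /D big_cons -/(D b (rem x l) x) -/(D b (rem x l) y) ordb_sym.
by rewrite eaddACA.
Qed.

Lemma Pl_perm b l1 l2 : perm_eq l1 l2 -> Pl b l1 = Pl b l2.
Proof.
elim: l1 l2 => [|x l1 IH] l2 hp.
  by move: (perm_size hp) => /= /esym /size0nil ->.
have hx : x \in l2 by rewrite -(perm_mem hp) mem_head.
rewrite (Pl_rem b hx) /=.
have hp' : perm_eq l1 (rem x l2).
  by rewrite -(perm_cons x); apply: perm_trans hp (perm_to_rem hx).
by rewrite (IH _ hp') /D (perm_big _ hp').
Qed.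

Lemma Pl_rcons b l x : Pl b (rcons l x) = eadd (D b l x) (Pl b l).
Proof. have hp : perm_eq (rcons l x) (x :: l) by rewrite perm_rcons.
by rewrite (Pl_perm b hp). Qed.

Definition cong (b k : nat) (x y : int) : bool := (b ^ k %| `|(x - y)%R|)%N.
Definition cnt b k (l : seq int) x := count (cong b k x) l.

Lemma congE b k x y : cong b k x y = ((b ^ k)%:Z %| (x - y)%R)%Z.
Proof. by []. Qed.

Lemma cong_refl b k x : cong b k x x. Proof. by rewrite /cong subrr dvdn0. Qed.
Lemma cong_sym b k x y : cong b k x y = cong b k y x.
Proof. by rewrite /cong -opprB abszN. Qed.
Lemma cong_trans b k x y z : cong b k x y -> cong b k y z -> cong b k x z.
Proof.
rewrite !congE => h1 h2.
have -> : (x - z = (x - y) + (y - z))%R by rewrite addrA subrK.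
exact: rpredD.
Qed.
Lemma cong_S b k x y : cong b k.+1 x y -> cong b k x y.
Proof. by rewrite /cong; apply: dvdn_trans; rewrite dvdn_exp2l. Qed.

Lemma pigeon (T : eqType) (e : rel T) : reflexive e -> symmetric e -> transitive e ->
  forall (L A : seq T), (forall x, x \in L -> count (e x) L <= count (e x) A) ->
  size L <= size A.
Proof.
move=> er es et L; move: {2}(size L) (leqnn (size L)) => n.
elim: n L => [|n IH] L.
  by rewrite leqn0 => /eqP/size0nil -> A.
case: L => [|x L] // hs A H.
have Hx := H x (mem_head _ _).
rewrite -(count_predC (e x) (x :: L)) -(count_predC (e x) A).
apply: leq_add => //.
rewrite -!size_filter.
apply: IH.
  rewrite size_filter /= er /=.
  by rewrite add0n; apply: leq_trans (count_size _ L) _; rewrite -ltnS.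
move=> z; rewrite mem_filter => /andP [nxz zL].
have eqc : forall s, count (e z) [seq y <- s | predC (e x) y] = count (e z) s.
  move=> s; rewrite count_filter; apply: eq_count => y /=.
  case ezy: (e z y) => //=; apply/negP => exy.
  by move: nxz => /=; rewrite (et _ _ _ exy) // es.
by rewrite !eqc; apply: H.
Qed.

Lemma cnt_step b k L A x0 : x0 \in L -> cnt b k A x0 < cnt b k L x0 ->
  exists2 x1, x1 \in L & cong b k x0 x1 && (cnt b k.+1 A x1 < cnt b k.+1 L x1).
Proof.
move=> hx0 hlt.
case: (boolP (has (fun x1 => cong b k x0 x1 && (cnt b k.+1 A x1 < cnt b k.+1 L x1)) L)).
  by move=> /hasP [x1 h1 h2]; exists x1.
move=> /hasPn H; exfalso.
have eqc : forall z s, cong b k x0 z ->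
    count (cong b k.+1 z) [seq y <- s | cong b k x0 y] = cnt b k.+1 s z.
  move=> z s hz; rewrite count_filter; apply: eq_count => y /=.
  case hzy: (cong b k.+1 z y) => //=.
  exact: cong_trans hz (cong_S hzy).
have := @pigeon _ (cong b k.+1) (@cong_refl b k.+1)
  (fun x y => cong_sym b k.+1 x y) (fun x y z => @cong_trans b k.+1 y x z)
  [seq y <- L | cong b k x0 y] [seq y <- A | cong b k x0 y].
rewrite !size_filter -/(cnt b k L x0) -/(cnt b k A x0) leqNgt hlt /= => hf; suff: false by []; apply: hf => z; rewrite mem_filter => /andP [hz zL].
rewrite !eqc //.
by move: (H z zL); rewrite hz /= -leqNgt.
Qed.

Lemma descent b K n : forall k0 L A x0, k0 + n = K -> x0 \in L ->
  cnt b k0 A x0 < cnt b k0 L x0 ->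
  exists2 x, x \in L & cong b k0 x0 x &&
    [forall k : 'I_K.+1, (k0 <= k) ==> (cnt b k A x < cnt b k L x)].
Proof.
elim: n => [|n IH] k0 L A x0 hK hx0 hlt.
  exists x0 => //; rewrite cong_refl /=; apply/forallP => k; apply/implyP => hk.
  have -> : (k : nat) = k0 by have := ltn_ord k; lia.
  exact: hlt.
have [x1 hx1 /andP [c01 hlt1]] := cnt_step hx0 hlt.
have [x hx /andP [c1x /forallP Hx]] := IH k0.+1 L A x1 (etrans (addSnnS _ _) hK) hx1 hlt1.
exists x => //.
have c0x : cong b k0 x0 x by apply: cong_trans c01 (cong_S c1x).
rewrite c0x /=; apply/forallP => k; apply/implyP => hk.
case: (ltngtP k0 k) hk => // [hk _|<- _].
  by have := Hx k; rewrite hk.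
have ec : forall s, cnt b k0 s x = cnt b k0 s x0.
  move=> s; apply: eq_count => y /=.
  apply/idP/idP => h; first by apply: cong_trans c0x h.
  by apply: cong_trans _ h; rewrite cong_sym.
by rewrite !ec.
Qed.

Lemma CL b K L A : size A < size L ->
  exists2 x, x \in L & forall k, k <= K -> cnt b k A x < cnt b k L x.
Proof.
case: L => [|x0 L] // hs.
have h0 : forall s x, cnt b 0 s x = size s.
  by move=> s x; rewrite /cnt /cong expn0 -(count_predT s); apply: eq_count => y; rewrite dvd1n.
have hlt0 : cnt b 0 A x0 < cnt b 0 (x0 :: L) x0 by rewrite !h0.
have [x hx /andP [_ /forallP H]] := @descent b K K 0 (x0 :: L) A x0 (add0n K) (mem_head _ _) hlt0.
exists x => // k hk.
by have := H (Ordinal (hk : k < K.+1)).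
Qed.

Lemma sum_le_min v K : \sum_(1 <= k < K.+1) (k <= v : nat) = minn K v.
Proof.
elim: K => [|K IH]; first by rewrite big_geq // min0n.
rewrite big_nat_recr //= IH.
case: (leqP K.+1 v) => h /=; lia.
Qed.

Lemma ordb_fin b (a : int) K : 1 < b -> a != 0%R -> (`|a| <= K)%N ->
  ordb b a = Fin (\sum_(1 <= k < K.+1) (b ^ k %| `|a|)%N).
Proof.
move=> hb ha hK; rewrite /ordb (negbTE ha).
set n := `|a|%N.
have n0 : 0 < n by rewrite absz_gt0.
set v := \max_(k < n.+1 | (b ^ k %| n)%N) k.
have hv : (b ^ v %| n)%N.
  rewrite /v; apply: (big_ind (fun x => (b ^ x %| n)%N)) => //.
  by move=> x y hx hy; case: (leqP x y) => h; rewrite ?(maxn_idPr h) ?(maxn_idPl (ltnW h)).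
have H : forall k, (b ^ k %| n)%N = (k <= v).
  move=> k; apply/idP/idP => h.
    have kn : k < n.+1.
      have := dvdn_leq n0 h; have := ltn_expl k hb; lia.
    exact: (@leq_bigmax_cond _ (fun k : 'I_n.+1 => (b ^ k %| n)%N) (fun k : 'I_n.+1 => (k : nat)) (Ordinal kn)).
  by apply: dvdn_trans hv; rewrite dvdn_exp2l.
have vn : v <= n by have := dvdn_leq n0 hv; have := ltn_expl v hb; lia.
congr Fin; rewrite (eq_bigr (fun k => (k <= v : nat))); last by move=> k _; rewrite H.
rewrite sum_le_min; lia.
Qed.

Lemma bigFin (l : seq int) (f : int -> nat) :
  \big[eadd/Fin 0]_(y <- l) Fin (f y) = Fin (\sum_(y <- l) f y).
Proof. by elim: l => [|y l IH]; rewrite ?big_nil // !big_cons IH. Qed.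

Lemma D_fin b K l x : 1 < b -> (forall y, y \in l -> y != x /\ (`|(x - y)%R| <= K)%N) ->
  D b l x = Fin (\sum_(1 <= k < K.+1) cnt b k l x).
Proof.
move=> hb H.
rewrite /D (eq_big_seq (fun y => Fin (\sum_(1 <= k < K.+1) cong b k x y))); last first.
  move=> y hy; have [ne hk] := H y hy.
  by apply: ordb_fin => //; rewrite subr_eq0 eq_sym.
rewrite bigFin exchange_big /=; congr Fin; apply: eq_bigr => k _.
rewrite /cnt; elim: l {H} => [|y l IH]; first by rewrite big_nil.
by rewrite big_cons IH.
Qed.

Lemma bound (l : seq int) : exists K, forall x y, x \in l -> y \in l -> (`|(x - y)%R| <= K)%N.
Proof.
exists ((\max_(z <- l) `|z|) + (\max_(z <- l) `|z|))%N => x y hx hy.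
apply: leq_trans (leqD_dist x 0 y) _.
rewrite subr0 sub0r abszN; apply: leq_add.
  exact: (@leq_bigmax_seq _ l predT (fun z => `|z|%N) x hx).
exact: (@leq_bigmax_seq _ l predT (fun z => `|z|%N) y hy).
Qed.

Lemma ML b L A : 1 < b -> size A < size L ->
  exists2 x, x \in L & ele (D b A x) (D b (rem x L) x).
Proof.
move=> hb hs.
have [K HK] := bound (L ++ A).
have [x xL Hx] := CL b K hs.
exists x => //.
case: (boolP (x \in rem x L)) => hxr; first by rewrite (D_Inf b hxr) ele_Inf.
have hperm := perm_to_rem xL.
have cL : forall k, cnt b k L x = (cnt b k (rem x L) x).+1.
  by move=> k; rewrite /cnt (permP hperm) /= cong_refl.
have Hr : forall y, y \in rem x L -> y != x /\ (`|(x - y)%R| <= K)%N.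
  move=> y hy; split; first by apply/eqP => e; move: hy; rewrite e (negbTE hxr).
  by apply: HK; rewrite mem_cat ?xL // (mem_rem hy).
have cK : cnt b K (rem x L) x = 0.
  apply/eqP; rewrite -leqn0 leqNgt -has_count; apply/hasPn => y hy.
  have [ne hk] := Hr y hy; apply/negP => hd.
  have pos : (0 < `|(x - y)%R|)%N by rewrite absz_gt0 subr_eq0 eq_sym.
  have := dvdn_leq pos hd; have := ltn_expl K hb; lia.
have cA : cnt b K A x = 0.
  by have := Hx K (leqnn K); rewrite cL cK; case: (cnt b K A x).
have HA : forall y, y \in A -> y != x /\ (`|(x - y)%R| <= K)%N.
  move=> y hy; split.
    apply/eqP => e; move: cA; rewrite /cnt => /eqP; rewrite -leqn0 leqNgt -has_count.
    by move/hasPn => /(_ y hy); rewrite e cong_refl.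
  by apply: HK; rewrite mem_cat ?xL // hy orbT.
rewrite (D_fin hb HA) (D_fin hb Hr) /=.
rewrite big_nat_cond [X in (_ <= X)%N]big_nat_cond; apply: leq_sum => k /andP [/andP [_ hk] _].
by have := Hx k hk; rewrite cL ltnS.
Qed.

Definition pre (a : nat -> int) n := map a (iota 0 n).

Lemma Dpre b s i z : D b (pre s i) z = \big[eadd/Fin 0]_(j < i) ordb b (z - s j)%R.
Proof.
rewrite /D /pre big_map.
have -> : iota 0 i = index_iota 0 i by rewrite /index_iota subn0.
by rewrite big_mkord.
Qed.

Lemma pre_S s n : pre s n.+1 = rcons (pre s n) (s n).
Proof. by rewrite /pre -addn1 iotaD map_cat cats1. Qed.

Lemma Pl1 b s : Pl b (pre s 1) = Fin 0.
Proof. by rewrite /= /D big_nil. Qed.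

Lemma T b S a : 1 < b -> is_b_ordering S b a -> forall m L, size L = m.+1 ->
  (forall y, y \in L -> S y) -> ele (Pl b (pre a m.+1)) (Pl b L).
Proof.
move=> hb [HS Ha]; elim=> [|m IH] L hL LS; first by rewrite Pl1 ele0.
have hs : size (pre a m.+1) < size L by rewrite hL /pre size_map size_iota.
have [x xL Hx] := ML hb hs.
rewrite pre_S Pl_rcons (Pl_rem b xL).
apply: ele_add.
  apply: ele_trans Hx; rewrite !Dpre; exact: Ha (LS x xL).
apply: IH; first by rewrite size_rem // hL.
by move=> y hy; apply: LS; apply: (mem_rem hy).
Qed.

Lemma alpha_sumE b s m : alpha_sum b s m = Pl b (pre s m.+1).
Proof.
elim: m => [|m IH]; first by rewrite Pl1 /alpha_sum big_geq.
rewrite /alpha_sum big_nat_recr // -/(alpha_sum b s m) IH.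
by rewrite (pre_S s m.+1) Pl_rcons eaddC /alpha Dpre.
Qed.

Theorem theorem3p5 (b : nat) (S : int -> Prop) :
  (2 <= b)%N -> (exists x, S x) ->
  (* (1) *)
  (forall (n : enat) (s : nat -> int) (a : nat -> int),
     card_ge S n ->
     (forall i, ele (Fin i) n -> S (s i)) ->
     is_b_ordering S b a ->
     forall m, (1 <= m)%N -> elt (Fin m) n ->
       ele (alpha_sum b a m) (alpha_sum b s m)) /\
  (* (2) *)
  (forall (N : nat) (s : nat -> int) (a0 a : nat -> int),
     (1 <= N)%N ->
     is_b_ordering S b a0 -> (forall i, (i <= N)%N -> s i = a0 i) ->
     is_b_ordering S b a ->
     forall m, (1 <= m)%N -> (m <= N)%N ->
       alpha_sum b s m = alpha_sum b a m).
Proof.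
move=> hb _; split.
  move=> n s a _ Hs Ha m _ Hm; rewrite !alpha_sumE.
  apply: (T hb Ha); first by rewrite /pre size_map size_iota.
  move=> y /mapP [i hi ->]; apply: Hs.
  move: hi Hm; rewrite mem_iota add0n; case: n => [n'|] //= hi hm.
  lia.
move=> N s a0 a _ H0 Hs Ha m _ hmN.
have -> : alpha_sum b s m = alpha_sum b a0 m.
  rewrite !alpha_sumE /pre; congr Pl; apply/eq_in_map => i; rewrite mem_iota add0n => hi.
  by apply: Hs; lia.
have inS : forall c, is_b_ordering S b c -> forall y, y \in pre c m.+1 -> S y.
  by move=> c [Hc _] y /mapP [i _ ->].
rewrite !alpha_sumE; apply: ele_anti.
  by apply: (T hb H0); [rewrite /pre size_map size_iota | exact: inS Ha].
by apply: (T hb Ha); [rewrite /pre size_map size_iota | exact: inS H0].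
Qed.
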